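(* Let $n=ks\ge 2$ with $k,s$ positive integers and $k<n$, and let $\mathcal{C}$ be an optimum distance full flag code on $\mathbb{F}_q^n$ whose $k$-projected code $\mathcal{C}_k$ is a $k$-spread of $\mathbb{F}_q^n$. If $n\neq 3$, then $s=2$.
   Context: $q$ is a prime power. For subspaces $\mathcal{U},\mathcal{V}$ of $\mathbb{F}_q^n$, $d_S(\mathcal{U},\mathcal{V})=\dim(\mathcal{U}+\mathcal{V})-\dim(\mathcal{U}\cap\mathcal{V})$. A full flag on $\mathbb{F}_q^n$ is a tuple $(\mathcal{F}_1,\ldots,\mathcal{F}_{n-1})$ of subspaces with $\mathcal{F}_1\subsetneq\cdots\subsetneq\mathcal{F}_{n-1}$ and $\dim\mathcal{F}_i=i$. A full flag code is a set $\mathcal{C}$ of at least two full flags; its distance $d_f(\mathcal{C})$ is the minimum over distinct $\mathcal{F},\mathcal{F}'\in\mathcal{C}$ of $\sum_i d_S(\mathcal{F}_i,\mathcal{F}'_i)$; it is an optimum distance full flag code if $d_f(\mathcal{C})=2\left(\sum_{i\le\lfloor n/2\rfloor} i+\sum_{i>\lfloor n/2\rfloor}^{n-1}(n-i)\right)$. The $i$-projected code is $\mathcal{C}_i=\{\mathcal{F}_i:\mathcal{F}\in\mathcal{C}\}$. A $k$-spread of $\mathbb{F}_q^n$ ($k\mid n$) is a set of $k$-dimensional subspaces pairwise intersecting trivially, of cardinality $(q^n-1)/(q^k-1)$ (equivalently, partitioning the nonzero vectors of $\mathbb{F}_q^n$). *)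

(* Defs.v *)
From HB Require Import structures.
From mathcomp Require Import all_boot all_order all_algebra all_field.
Set Implicit Arguments. Unset Strict Implicit. Unset Printing Implicit Defensive.
Import GRing.Theory.
Local Open Scope ring_scope.

(* Ambient space F_q^n is 'rV[F]_n, subspaces are {vspace 'rV[F]_n}.
   A full flag (F_1, ..., F_{n-1}) is represented by the sequence
   [:: F_1; ...; F_{n-1}] of length n-1; flag_at t i = F_i. *)

Section FlagDefs.
Variables (F : finFieldType) (n : nat).
Local Notation sp := {vspace 'rV[F]_n}.

Definition flag_at (t : seq sp) (i : nat) : sp := nth 0%VS t i.-1.

Definition subspace_dist (U V : sp) : nat := (\dim (U + V) - \dim (U :&: V))%N.

Definition is_full_flag (t : seq sp) : Prop :=
  [/\ size t = n.-1,
      forall i, (1 <= i < n)%N -> \dim (flag_at t i) = i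
    & forall i, (1 <= i)%N -> (i.+1 < n)%N ->
        (flag_at t i <= flag_at t i.+1)%VS /\ flag_at t i != flag_at t i.+1].

Definition flag_dist (t t' : seq sp) : nat :=
  (\sum_(1 <= i < n) subspace_dist (flag_at t i) (flag_at t' i))%N.

Definition is_full_flag_code (C : seq sp -> Prop) : Prop :=
  (forall t, C t -> is_full_flag t) /\
  exists t t', [/\ C t, C t' & t <> t'].

Definition code_dist_is (C : seq sp -> Prop) (d : nat) : Prop :=
  (exists t t', [/\ C t, C t', t <> t' & flag_dist t t' = d]) /\
  (forall t t', C t -> C t' -> t <> t' -> (d <= flag_dist t t')%N).

Definition max_flag_dist : nat :=
  (2 * (\sum_(1 <= i < (n./2).+1) i + \sum_((n./2).+1 <= i < n) (n - i)))%N.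

Definition is_optimum_distance_ffc (C : seq sp -> Prop) : Prop :=
  is_full_flag_code C /\ code_dist_is C max_flag_dist.

Definition projected_code (C : seq sp -> Prop) (i : nat) : sp -> Prop :=
  fun U => exists t, C t /\ flag_at t i = U.

(* k-spread: k-dim subspaces pairwise trivially intersecting, of cardinality
   (q^n - 1)/(q^k - 1), q = #|F|; the cardinality is expressed by a
   duplicate-free enumeration of the set. *)
Definition is_spread (k : nat) (S : sp -> Prop) : Prop :=
  [/\ (forall U, S U -> \dim U = k),
      (forall U V, S U -> S V -> U <> V -> (U :&: V = 0)%VS)
    & exists s : seq sp, [/\ uniq s, (forall U, S U <-> U \in s)
        & size s = ((#|F| ^ n - 1) %/ (#|F| ^ k - 1))%N]].

End FlagDefs.

(* Main.v *)
Require Import Defs.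
From HB Require Import structures.
From mathcomp Require Import all_boot all_order all_algebra all_field.
From mathcomp Require Import zify.
Set Implicit Arguments. Unset Strict Implicit. Unset Printing Implicit Defensive.
Import GRing.Theory.
Local Open Scope ring_scope.

Section S.
Variables (F : finFieldType) (n : nat).
Local Notation sp := {vspace 'rV[F]_n}.

Definition nzset (U : sp) := [set x : 'rV[F]_n | (x \in U) && (x != 0)].

Lemma card_nz (U : sp) : #|nzset U| = (#|F| ^ \dim U - 1)%N.
Proof.
have -> : nzset U = [set x in U] :\ 0.
  by apply/setP => x; rewrite !inE andbC.
have := cardsD1 0 [set x in U]; rewrite inE mem0v cardsE card_vspace => ->.
by rewrite add1n subn1.
Qed.

Lemma bigcup_seqP' (s : seq sp) (A : sp -> {set 'rV[F]_n}) x :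
  x \in \bigcup_(U <- s) A U -> exists2 U, U \in s & x \in A U.
Proof.
elim: s => [|a s IH]; first by rewrite big_nil inE.
rewrite big_cons inE => /orP [xa|/IH [U Us xU]]; first by exists a; rewrite ?inE ?eqxx.
by exists U; rewrite // inE Us orbT.
Qed.

Lemma card_union (s : seq sp) : uniq s ->
  (forall U V, U \in s -> V \in s -> U <> V -> (U :&: V = 0)%VS) ->
  #|\bigcup_(U <- s) nzset U| = (\sum_(U <- s) #|nzset U|)%N.
Proof.
elim: s => [|a s IH] /=; first by rewrite !big_nil cards0.
case/andP => anot us Hd.
rewrite !big_cons cardsU -IH //; last first.
  by move=> U V HU HV; apply: Hd; rewrite inE ?HU ?HV orbT.
suff -> : nzset a :&: \bigcup_(U <- s) nzset U = set0 by rewrite cards0 subn0.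
apply/setP => x; rewrite !inE; apply/negbTE/negP => /andP [].
move=> /andP [xa xnz] /bigcup_seqP' [U Us xU].
rewrite inE in xU; case/andP: xU => xU _.
have aU : a <> U by move=> E; rewrite E Us in anot.
have := Hd a U; rewrite inE eqxx => /(_ isT); rewrite inE Us orbT => /(_ isT aU) H.
have : x \in (a :&: U)%VS by rewrite memv_cap xa xU.
by rewrite H memv0 (negbTE xnz).
Qed.

Lemma cover_lemma (s : seq sp) k : uniq s -> (0 < n)%N -> (0 < k)%N -> (k %| n)%N ->
  (forall U, U \in s -> \dim U = k) ->
  (forall U V, U \in s -> V \in s -> U <> V -> (U :&: V = 0)%VS) ->
  size s = ((#|F| ^ n - 1) %/ (#|F| ^ k - 1))%N ->
  forall v : 'rV[F]_n, v != 0 -> exists2 U, U \in s & v \in U.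
Proof.
move=> us np kp kn Hdim Hd Hsz v vnz.
case: (boolP (has (fun U : sp => v \in U) s)) => [/hasP [U Us vU]|/hasPn Hn].
  by exists U.
exfalso.
have q1 : (1 < #|F|)%N by exact: card_finNzRing_gt1.
have hsum : (\sum_(U <- s) #|nzset U| = size s * (#|F| ^ k - 1))%N.
  rewrite (eq_big_seq (fun=> (#|F| ^ k - 1)%N)); last first.
    by move=> U Us; rewrite card_nz Hdim.
  by rewrite big_const_seq count_predT iter_addn_0 mulnC.
have hdiv : (#|F| ^ k - 1 %| #|F| ^ n - 1)%N.
  case/dvdnP: kn => m ->; rewrite mulnC expnM.
  by rewrite -{2}(exp1n m) subn_exp -(exp1n m) exp1n dvdn_mulr.
have hcard : (#|\bigcup_(U <- s) nzset U| = #|F| ^ n - 1)%N.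
  by rewrite card_union // hsum Hsz divnK.
have hsub : \bigcup_(U <- s) nzset U \subset [set: 'rV[F]_n] :\ 0 :\ v.
  apply/subsetP => x /bigcup_seqP' [U Us xU].
  rewrite !inE in xU *; case/andP: xU => xU xnz; rewrite xnz ?andbT /=.
  by apply/eqP => E; move: (Hn U Us); rewrite -E xU.
have H1 := subset_leq_card hsub.
rewrite hcard in H1.
set A := [set: 'rV[F]_n] :\ 0 in H1.
have E1 : #|A| = (1 + #|A :\ v|)%N.
  by rewrite (cardsD1 v A) !inE vnz.
have E : (#|F| ^ n = 1 + #|A|)%N.
  by rewrite -[in LHS](mul1n n) -card_mx -cardsT (cardsD1 0 [set: 'rV[F]_n]) !inE.
have : (1 < #|F| ^ n)%N by rewrite -(expn0 #|F|) ltn_exp2l.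
move: H1 E1 E; move: #|A :\ v| #|A| (#|F| ^ n)%N => b a N; lia.
Qed.

Definition mi (i : nat) : nat := if (i <= n./2)%N then (2 * i)%N else (2 * (n - i))%N.

Lemma max_eq : (0 < n)%N -> max_flag_dist n = (\sum_(1 <= i < n) mi i)%N.
Proof.
move=> np; rewrite /max_flag_dist [in RHS](@big_cat_nat _ _ _ (n./2).+1) //=; last first.
  by rewrite -divn2; lia.
rewrite mulnDr !big_distrr /=; congr (_ + _).
  by apply: eq_big_nat => i /andP [_ hi]; rewrite /mi -ltnS hi.
by apply: eq_big_nat => i /andP [hi _]; rewrite /mi leqNgt hi.
Qed.

Lemma dist_le (U V : sp) i : \dim U = i -> \dim V = i -> (subspace_dist U V <= mi i)%N.
Proof.
move=> dU dV; rewrite /subspace_dist /mi.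
have h1 := dimv_sum_cap U V.
have h2 : (\dim (U + V) <= n)%N.
  have := dimvS (subvf (U + V)%VS); rewrite dimvf /dim /= mul1n //.
rewrite dU dV in h1.
move: h1 h2; move: (\dim (U + V)) (\dim (U :&: V)) => a b.
case: ifP => _; lia.
Qed.

Lemma dist_max (U V : sp) i : \dim U = i -> \dim V = i ->
  subspace_dist U V = (2 * i)%N -> (U :&: V = 0)%VS.
Proof.
move=> dU dV; rewrite /subspace_dist => h.
have h1 := dimv_sum_cap U V; rewrite dU dV in h1.
apply/eqP; rewrite -dimv_eq0; apply/eqP.
move: h h1; move: (\dim (U + V)) (\dim (U :&: V)) => a b; lia.
Qed.

End S.

Lemma sum_le_eq (a b : nat -> nat) lo hi j :
  (forall i, (lo <= i < hi)%N -> (a i <= b i)%N) ->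
  (\sum_(lo <= i < hi) b i <= \sum_(lo <= i < hi) a i)%N ->
  (lo <= j < hi)%N -> a j = b j.
Proof.
move=> hle hs hj.
have : (\sum_(lo <= i < hi | lo <= i < hi) (b i - a i) == 0)%N.
  by rewrite sumnB // -!big_nat subn_eq0.
rewrite sum_nat_seq_eq0 => /allP /(_ j); rewrite mem_index_iota hj => /(_ isT).
rewrite /= subn_eq0 => h; apply/eqP; rewrite eqn_leq h hle //.
Qed.

Theorem proposition4p1 (F : finFieldType) (n k s : nat)
  (C : seq {vspace 'rV[F]_n} -> Prop) :
  (2 <= n)%N -> (0 < k)%N -> (0 < s)%N -> n = (k * s)%N -> (k < n)%N ->
  is_optimum_distance_ffc C ->
  is_spread k (projected_code C k) ->
  n <> 3%N -> s = 2%N.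
Proof.
move=> n2 kp sp nks kn [[Hff [t0 [t1 [Ct0 _ _]]]] [_ Hmin]] [Sdim Scap [ls [uls Hls Hsz]]] n3.
case: (eqVneq s 2) => // s2.
exfalso.
have s3 : (3 <= s)%N.
  case: s sp s2 nks kn => [|[|[|s']]] //= _ _ ->; rewrite muln1 ltnn //.
have hj : (k.+1 <= n./2)%N.
  rewrite -divn2; subst n.
  case: k kp {kn Sdim Hsz Hls Hff Hmin Ct0 C ls uls Scap t0 t1} n2 n3 => [|[|k']] // _ n2 n3.
    rewrite mul1n in n3 *; lia.
  nia.
have hjn : (k.+1 < n)%N by move: hj; rewrite -divn2; lia.
set j := k.+1.
have P : forall t t', C t -> C t' -> t <> t' ->
    (flag_at t j :&: flag_at t' j = 0)%VS.
  move=> t t' Ct Ct' ne.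
  have := Hmin t t' Ct Ct' ne; rewrite max_eq; last by lia.
  case: (Hff t Ct) => _ dt _; case: (Hff t' Ct') => _ dt' _.
  rewrite /flag_dist => hs.
  have := @sum_le_eq (fun i => subspace_dist (flag_at t i) (flag_at t' i)) (@mi n) 1 n j.
  move=> /(_ _ hs) h.
  have hb : forall i, (0 < i < n)%N ->
      (subspace_dist (flag_at t i) (flag_at t' i) <= mi n i)%N.
    by move=> i hi; apply: dist_le; [exact: dt hi | exact: dt' hi].
  have hjr : (0 < j < n)%N by rewrite /j hjn.
  have := h hb hjr; rewrite /mi hj => e.
  exact: (dist_max (dt j hjr) (dt' j hjr) e).
have cov : forall v : 'rV[F]_n, v != 0 ->
    exists t', C t' /\ v \in flag_at t' k.
  move=> v vnz.
  have kdn : (k %| n)%N by rewrite nks dvdn_mulr.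
  have [U Us vU] := @cover_lemma F n ls k uls (ltnW n2) kp kdn
     (fun U hU => Sdim U (proj2 (Hls U) hU))
     (fun U V hU hV => Scap U V (proj2 (Hls U) hU) (proj2 (Hls V) hV)) Hsz v vnz.
  have [t' [Ct' et']] := proj2 (Hls U) Us.
  by exists t'; rewrite et'.
have chain : forall t, C t -> (flag_at t k <= flag_at t j)%VS.
  move=> t Ct; case: (Hff t Ct) => _ _ hc.
  by case: (hc k kp hjn).
case: (Hff t0 Ct0) => _ dt0 _.
have : ~~ (flag_at t0 j <= flag_at t0 k)%VS.
  apply/negP => /dimvS; rewrite (dt0 j) ?(dt0 k) ?kp ?kn // ?/j ?hjn ?ltnn //.
case/subvPn => v vj vk.
have vnz : v != 0 by apply/negP => /eqP v0; rewrite v0 mem0v in vk.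
have [t' [Ct' vt']] := cov v vnz.
case: (eqVneq t' t0) => [e|ne].
  by move: vk; rewrite -e vt'.
have hc := P t0 t' Ct0 Ct' (fun e => elimN eqP ne (esym e)).
have : v \in (flag_at t0 j :&: flag_at t' j)%VS.
  by rewrite memv_cap vj (subvP (chain t' Ct')).
by rewrite hc memv0 (negbTE vnz).
Qed.
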